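(* Let $\mathbf{K}=(K,\leq_p)$ be an AEC such that $K$ is a class of torsion-free abelian groups, $K$ is closed under pure subgroups, and $K$ has arbitrarily large models. Then $\mathbf{K}$ is $\lambda$-stable for every infinite cardinal $\lambda$ with $\lambda^{\aleph_0}=\lambda$.
   Context: Abelian groups are $\mathbb{Z}$-modules; $\leq_p$ is the pure subgroup relation. An AEC $(K,\leq_p)$: closed under isomorphism and unions of $\leq_p$-chains, with a Löwenheim–Skolem number. Galois types $\mathbf{gtp}(b/A;N)$ are classes of triples $(b,A,N)$ under the transitive closure of: $(b_1,A,N_1)\sim(b_2,A,N_2)$ iff there exist $N'\in K$ and pure embeddings $f_\ell:N_\ell\to N'$ fixing $A$ with $f_1(b_1)=f_2(b_2)$; $\mathbf{gS}(M)$ is the set of Galois types of single elements over $M$ in pure extensions in $K$. $\mathbf{K}$ is $\lambda$-stable if $|\mathbf{gS}(M)|\leq\lambda$ for all $M\in K$ of size $\lambda$. *)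

(* Defs.v *)
From HB Require Import structures.
From mathcomp Require Import all_boot all_algebra.
From Stdlib Require Import Relations.
Set Implicit Arguments. Unset Strict Implicit. Unset Printing Implicit Defensive.
Import GRing.Theory.
Local Open Scope ring_scope.

Definition is_hom (G H : zmodType) (f : G -> H) : Prop :=
  forall x y, f (x + y) = f x + f y.

Definition subset_of (U : Type) (S T : U -> Prop) : Prop := forall x, S x -> T x.

Definition pure_in (U : zmodType) (S T : U -> Prop) : Prop :=
  forall (n : nat) (s : U), S s -> (exists t, T t /\ t *+ n = s) ->
    exists y, S y /\ y *+ n = s.

Definition range_of (A B : Type) (f : A -> B) : B -> Prop := fun y => exists x, f x = y.

Definition pure_emb (G H : zmodType) (f : G -> H) : Prop :=
  injective f /\ is_hom f /\ pure_in (range_of f) (fun _ => True).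

(** Cardinal comparisons of types (types stand for cardinals). *)
Definition same_card (A B : Type) : Prop := exists f : A -> B, bijective f.
Definition le_card (A B : Type) : Prop := exists f : A -> B, injective f.
Definition infinite_type (A : Type) : Prop := le_card nat A.

Definition in_K (K : zmodType -> Prop) (U : zmodType) (S : U -> Prop) : Prop :=
  exists (G : zmodType) (f : G -> U),
    K G /\ injective f /\ is_hom f /\ (forall y, S y <-> range_of f y).

Definition bigU (U : Type) (C : (U -> Prop) -> Prop) : U -> Prop :=
  fun x => exists S, C S /\ S x.

(** The partial-order and coherence
    axioms are automatic for the pure-subgroup relation; chains are indexed by
    well-orders (given as well-ordered families of subgroups of an ambient group). *)
Record AEC_pure (K : zmodType -> Prop) : Prop := {
  aec_iso : forall (G H : zmodType) (f : G -> H),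
      K G -> is_hom f -> bijective f -> K H;
  aec_chain : forall (U : zmodType) (C : (U -> Prop) -> Prop),
      (exists S, C S) ->
      (forall S T, C S -> C T -> subset_of S T \/ subset_of T S) ->
      (forall D : (U -> Prop) -> Prop, (forall S, D S -> C S) -> (exists S, D S) ->
         exists S0, D S0 /\ forall S, D S -> subset_of S0 S) ->
      (forall S, C S -> in_K K S) ->
      (forall S T, C S -> C T -> subset_of S T -> pure_in S T) ->
      in_K K (bigU C) /\ (forall S, C S -> pure_in S (bigU C));
  aec_LS : exists Mu : Type, infinite_type Mu /\
      forall N : zmodType, K N -> forall A : N -> Prop,
        exists (G : zmodType) (f : G -> N),
          K G /\ pure_emb f /\ subset_of A (range_of f) /\
          le_card G ({a | A a} + Mu)%type
}.

Definition torsion_free_class (K : zmodType -> Prop) : Prop :=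
  forall G : zmodType, K G -> forall (x : G) (n : nat), (0 < n)%N -> x *+ n = 0 -> x = 0.

Definition closed_pure_sub (K : zmodType -> Prop) : Prop :=
  forall (G N : zmodType) (f : G -> N), K N -> pure_emb f -> K G.

Definition arb_large (K : zmodType -> Prop) : Prop :=
  forall L : Type, exists N : zmodType, K N /\ le_card L N.

(** Triples (b, M, N) with M <=_p N, N ∈ K, b ∈ N (M embedded purely into N via f). *)
Record gtriple (K : zmodType -> Prop) (M : zmodType) := GTriple {
  gt_N : zmodType;
  gt_K : K gt_N;
  gt_f : M -> gt_N;
  gt_emb : pure_emb gt_f;
  gt_b : gt_N
}.

(** Atomic equivalence: amalgamation over M identifying the two elements. *)
Definition gtp_atomic (K : zmodType -> Prop) (M : zmodType) (t1 t2 : gtriple K M) : Prop :=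
  exists (N' : zmodType) (g1 : gt_N t1 -> N') (g2 : gt_N t2 -> N'),
    K N' /\ pure_emb g1 /\ pure_emb g2 /\
    (forall m, g1 (gt_f t1 m) = g2 (gt_f t2 m)) /\ g1 (gt_b t1) = g2 (gt_b t2).

Definition gtp_eq (K : zmodType -> Prop) (M : zmodType) : relation (gtriple K M) :=
  clos_trans _ (@gtp_atomic K M).

(** |gS(M)| <= |L|: an injection of the set of Galois types into L. *)
Definition gS_le (K : zmodType -> Prop) (M : zmodType) (L : Type) : Prop :=
  exists F : gtriple K M -> L, forall t1 t2, gtp_eq t1 t2 <-> F t1 = F t2.

Definition stable (K : zmodType -> Prop) (L : Type) : Prop :=
  forall M : zmodType, K M -> same_card M L -> gS_le K M L.

(* Main.v *)
Require Import Defs.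
From HB Require Import structures.
From mathcomp Require Import all_boot all_algebra.
From Stdlib Require Import Relations ClassicalEpsilon FunctionalExtensionality PropExtensionality.
Set Implicit Arguments. Unset Strict Implicit. Unset Printing Implicit Defensive.
Import GRing.Theory.
Local Open Scope ring_scope.

Section SubZ.
Variables (N : zmodType) (S : pred N).
Hypothesis HS : zmod_closed S.
Definition subT of zmod_closed S := {x : N | S x}.
HB.instance Definition _ := [isSub of subT HS for @sval N S].
HB.instance Definition _ := [Choice of subT HS by <:].
HB.instance Definition _ := GRing.isZmodClosed.Build N S HS.
HB.instance Definition _ := [SubChoice_isSubZmodule of subT HS by <:].
End SubZ.

Section Hom.
Variables (G H : zmodType) (f : G -> H).
Hypothesis hf : is_hom f.
Lemma hom0 : f 0 = 0.
Proof. apply: (addrI (f 0)); by rewrite -hf !addr0. Qed.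
Lemma homN x : f (- x) = - f x.
Proof. apply: (addrI (f x)); by rewrite -hf !subrr hom0. Qed.
Lemma homB x y : f (x - y) = f x - f y.
Proof. by rewrite hf homN. Qed.
Lemma homMn x n : f (x *+ n) = f x *+ n.
Proof. elim: n => [|n IH]; first by rewrite !mulr0n hom0. by rewrite !mulrS hf IH. Qed.
Lemma homMz x j : f (x *~ j) = f x *~ j.
Proof.
case: j => n; first exact: homMn.
rewrite NegzE !mulrNz homN; congr (- _); exact: homMn.
Qed.
End Hom.

Section Main.
Variable M : zmodType.

Definition Dr (N : zmodType) (f : M -> N) (b : N) (k : nat) (m : M) (j : int) : Prop :=
  exists x : N, x *+ k = f m + b *~ j.

Lemma Dr_transfer (N1 N2 N' : zmodType) (f1 : M -> N1) (f2 : M -> N2) b1 b2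
  (g1 : N1 -> N') (g2 : N2 -> N') :
  is_hom g1 -> pure_emb g2 -> (forall m, g1 (f1 m) = g2 (f2 m)) -> g1 b1 = g2 b2 ->
  forall k m j, Dr f1 b1 k m j -> Dr f2 b2 k m j.
Proof.
move=> hg1 [i2 [h2 p2]] hf hb k m j [x hx].
have H : exists t, (fun _ => True) t /\ t *+ k = g2 (f2 m + b2 *~ j).
  exists (g1 x); split=> //.
  by rewrite -(homMn hg1) hx hg1 (homMz hg1) hf hb h2 (homMz h2).
have [y [[x' hx'] hy]] := p2 k _ (ex_intro _ (f2 m + b2 *~ j) erefl) H.
exists x'; apply: i2; by rewrite (homMn h2) hx'.
Qed.

Lemma coset (N : zmodType) (f : M -> N) b : pure_emb f ->
  forall k m m' j, Dr f b k m j -> Dr f b k m' j -> exists y, y *+ k = m - m'.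
Proof.
move=> [i [h p]] k m m' j [x hx] [x' hx'].
have H : exists t, (fun _ => True) t /\ t *+ k = f (m - m').
  exists (x - x'); split => //.
  by rewrite mulrnBl hx hx' (homB h) opprD addrACA subrr addr0.
have [y0 [[y hy] hy0]] := p k _ (ex_intro _ (m - m') erefl) H.
exists y; apply: i; by rewrite (homMn h) hy.
Qed.

Lemma coset_back (N : zmodType) (f : M -> N) b : is_hom f ->
  forall k m m' j y, Dr f b k m' j -> y *+ k = m - m' -> Dr f b k m j.
Proof.
move=> h k m m' j y [x hx] hy; exists (x + f y).
by rewrite mulrnDl hx -(homMn h) hy (homB h) addrC addrA subrK.
Qed.

Lemma Elin_minus (N : zmodType) (f : M -> N) b : is_hom f -> forall m j m' j' a c,
  f (m *+ a - m' *+ c) + b *~ (j * a%:R - j' * c%:R)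
  = (f m + b *~ j) *+ a - (f m' + b *~ j') *+ c.
Proof.
move=> h m j m' j' a c.
by rewrite (homB h) !(homMn h) mulrzBr !mulrzA !mulrz_nat !mulrnDl opprD addrACA.
Qed.

Lemma Elin_plus (N : zmodType) (f : M -> N) b : is_hom f -> forall m j m' j' a c,
  f (m *+ a + m' *+ c) + b *~ (j * a%:R + j' * c%:R)
  = (f m + b *~ j) *+ a + (f m' + b *~ j') *+ c.
Proof.
move=> h m j m' j' a c.
by rewrite h !(homMn h) mulrzDr !mulrzA !mulrz_nat !mulrnDl addrACA.
Qed.

Lemma uniq_val (N1 N2 : zmodType) (f1 : M -> N1) (f2 : M -> N2) b1 b2 :
  is_hom f1 -> is_hom f2 -> (forall k m j, Dr f1 b1 k m j -> Dr f2 b2 k m j) ->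
  (forall (y : N2) n, (0 < n)%N -> y *+ n = 0 -> y = 0) ->
  forall x y y' k k' m m' j j', (0 < k)%N -> (0 < k')%N ->
  x *+ k = f1 m + b1 *~ j -> y *+ k = f2 m + b2 *~ j ->
  x *+ k' = f1 m' + b1 *~ j' -> y' *+ k' = f2 m' + b2 *~ j' -> y = y'.
Proof.
move=> h1 h2 D tf x y y' k k' m m' j j' k0 k'0 hx hy hx' hy'.
have [z hz] : Dr f2 b2 0 (m *+ k' - m' *+ k) (j * k'%:R - j' * k%:R).
  apply: D; exists 0.
  by rewrite mulr0n (Elin_minus _ h1) -hx -hx' -!mulrnA mulnC subrr.
apply/eqP; rewrite -subr_eq0; apply/eqP; apply: (tf _ (k * k')%N).
  by rewrite muln_gt0 k0.
rewrite mulrnBl mulrnA hy (mulnC k k') mulrnA hy' -(Elin_minus _ h2) -hz.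
by rewrite mulr0n.
Qed.

Section Constr.
Variables (N1 N2 : zmodType) (f1 : M -> N1) (f2 : M -> N2) (b1 : N1) (b2 : N2).
Hypotheses (pe1 : pure_emb f1) (pe2 : pure_emb f2).
Hypothesis tf1 : forall (y : N1) n, (0 < n)%N -> y *+ n = 0 -> y = 0.
Hypothesis tf2 : forall (y : N2) n, (0 < n)%N -> y *+ n = 0 -> y = 0.
Hypothesis DD : forall k m j, Dr f1 b1 k m j <-> Dr f2 b2 k m j.

Let h1 : is_hom f1 := proj1 (proj2 pe1).
Let h2 : is_hom f2 := proj1 (proj2 pe2).

Definition Pp (x : N1) := exists k m j, (0 < k)%N /\ x *+ k = f1 m + b1 *~ j.
Definition Pb : pred N1 :=
  fun x => if excluded_middle_informative (Pp x) then true else false.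
Lemma PbP x : Pb x <-> Pp x.
Proof. by rewrite /Pb; case: excluded_middle_informative. Qed.

Lemma Pb_closed : zmod_closed Pb.
Proof.
split.
  rewrite unfold_in; apply/PbP; exists 1%N, 0, 0; split => //.
  by rewrite mulr1n mulr0z addr0 (hom0 h1).
move=> x y; rewrite !unfold_in => /PbP [k [m [j [k0 hx]]]] /PbP [k' [m' [j' [k0' hy]]]].
apply/PbP; exists (k * k')%N, (m *+ k' - m' *+ k), (j * k'%:R - j' * k%:R); split.
  by rewrite muln_gt0 k0.
by rewrite mulrnBl mulrnA hx (mulnC k k') mulrnA hy (Elin_minus _ h1).
Qed.

Definition PT := subT Pb_closed.

Definition Q (x : N1) (y : N2) := exists k m j,
  [/\ (0 < k)%N, x *+ k = f1 m + b1 *~ j & y *+ k = f2 m + b2 *~ j].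
Definition psi (x : N1) : N2 :=
  match excluded_middle_informative (exists y, Q x y) with
  | left H => proj1_sig (constructive_indefinite_description _ H)
  | right _ => 0 end.

Lemma psi_spec x y k m j : (0 < k)%N -> x *+ k = f1 m + b1 *~ j ->
  y *+ k = f2 m + b2 *~ j -> psi x = y.
Proof.
move=> k0 hx hy; rewrite /psi; case: excluded_middle_informative => [H|H]; last first.
  by exfalso; apply: H; exists y, k, m, j.
case: constructive_indefinite_description => y0 [k1 [m1 [j1 [k10 hx1 hy1]]]] /=.
apply: (uniq_val h1 h2 _ tf2 k10 k0 hx1 hy1 hx hy).
by move=> ??? HD; apply/DD.
Qed.

Lemma psi_ex x : Pp x -> exists k m j,
  [/\ (0 < k)%N, x *+ k = f1 m + b1 *~ j & psi x *+ k = f2 m + b2 *~ j].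
Proof.
case=> k [m [j [k0 hx]]].
have [y hy] : Dr f2 b2 k m j by apply/DD; exists x.
by exists k, m, j; split => //; rewrite (psi_spec k0 hx hy).
Qed.

Lemma valPp (u : PT) : Pp (val u).
Proof. apply/PbP; exact: (valP u). Qed.

Definition g (u : PT) : N2 := psi (val u).

Lemma g_hom : is_hom g.
Proof.
move=> u v; rewrite /g raddfD /=.
have [k [m [j [k0 hx hy]]]] := psi_ex (valPp u).
have [k' [m' [j' [k0' hx' hy']]]] := psi_ex (valPp v).
apply: (@psi_spec _ _ (k * k')%N (m *+ k' + m' *+ k) (j * k'%:R + j' * k%:R)).
- by rewrite muln_gt0 k0.
- by rewrite mulrnDl mulrnA hx (mulnC k k') mulrnA hx' (Elin_plus _ h1).
- by rewrite mulrnDl mulrnA hy (mulnC k k') mulrnA hy' (Elin_plus _ h2).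
Qed.

Lemma g_inj : injective g.
Proof.
move=> u v huv; apply: val_inj.
have [k [m [j [k0 hx hy]]]] := psi_ex (valPp u).
have [k' [m' [j' [k0' hx' hy']]]] := psi_ex (valPp v).
rewrite -/(g u) in hy; rewrite -/(g v) -huv in hy'.
apply: (uniq_val h2 h1 _ tf1 k0 k0' hy hx hy' hx').
by move=> ??? HD; apply/DD.
Qed.

Lemma g_pure : pure_in (range_of g) (fun _ => True).
Proof.
move=> n s [u <-] [t [_ ht]].
case: n ht => [|n] ht.
  exists (g u); split; first by exists u.
  by rewrite mulr0n; rewrite mulr0n in ht.
have [k [m [j [k0 hx hy]]]] := psi_ex (valPp u).
rewrite -/(g u) -ht -mulrnA in hy.
have [x' hx'] : Dr f1 b1 (n.+1 * k)%N m j by apply/DD; exists t.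
have Px' : Pb x'.
  by apply/PbP; exists (n.+1 * k)%N, m, j; split => //; rewrite muln_gt0 k0.
exists t; split => //.
exists (Sub x' Px' : PT); rewrite /g SubK.
by apply: (psi_spec _ hx' hy); rewrite muln_gt0 k0.
Qed.

Lemma g_pe : pure_emb g.
Proof. split; [exact: g_inj | split; [exact: g_hom | exact: g_pure]]. Qed.

Lemma Pf1 m : Pb (f1 m).
Proof. apply/PbP; exists 1%N, m, 0; split => //; by rewrite mulr1n mulr0z addr0. Qed.

Definition fP (m : M) : PT := Sub (f1 m) (Pf1 m).

Lemma fP_pe : pure_emb fP.
Proof.
have [i1 [_ p1]] := pe1.
split; [|split].
- by move=> m m' /(congr1 val); rewrite /fP ?SubK; apply: i1.
- by move=> m m'; apply: val_inj; rewrite raddfD /= /fP ?SubK h1.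
move=> n s [m <-] [t [_ ht]].
have ht' : val t *+ n = f1 m by rewrite -raddfMn ht /fP ?SubK.
have H : exists t, (fun _ => True) t /\ t *+ n = f1 m by exists (val t).
have [y [[m' hm'] hy]] := p1 n _ (ex_intro _ m erefl) H.
exists (fP m'); split; first by exists m'.
by apply: val_inj; rewrite raddfMn /= /fP ?SubK hm'.
Qed.

Lemma Pb1 : Pb b1.
Proof. apply/PbP; exists 1%N, 0, 1; split => //; by rewrite mulr1n mulr1z (hom0 h1) add0r. Qed.

Definition bP : PT := Sub b1 Pb1.

Lemma val_pe : pure_emb (val : PT -> N1).
Proof.
split; [exact: val_inj | split; [by move=> u v; rewrite raddfD |]].
move=> n s [u <-] [t [_ ht]].
case: n ht => [|n] ht.
  exists (val u); split; first by exists u.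
  by rewrite mulr0n; rewrite mulr0n in ht.
have [k [m [j [k0 hx]]]] := valPp u.
have Pt : Pb t.
  apply/PbP; exists (n.+1 * k)%N, m, j; split; first by rewrite muln_gt0 k0.
  by rewrite mulrnA ht hx.
exists t; split => //; exists (Sub t Pt : PT); by rewrite SubK.
Qed.

Lemma id_pe (N : zmodType) : pure_emb (id : N -> N).
Proof.
split; [by move=> ?? | split; [by [] |]].
move=> n s _ [t [_ ht]]; exists t; split => //; by exists t.
Qed.

Lemma g_fP m : g (fP m) = f2 m.
Proof.
rewrite /g /fP SubK; apply: (@psi_spec _ _ 1%N m 0) => //;
  by rewrite mulr1n mulr0z addr0.
Qed.

Lemma g_bP : g bP = b2.
Proof.
rewrite /g /bP SubK; apply: (@psi_spec _ _ 1%N 0 1) => //;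
  by rewrite mulr1n mulr1z ?(hom0 h1) ?(hom0 h2) add0r.
Qed.

End Constr.

Lemma D_gtp (K : zmodType -> Prop) (HK : closed_pure_sub K) (tfK : torsion_free_class K)
  (t1 t2 : gtriple K M) :
  (forall k m j, Dr (gt_f t1) (gt_b t1) k m j <-> Dr (gt_f t2) (gt_b t2) k m j) ->
  gtp_eq t1 t2.
Proof.
move=> DD.
have tf1 := tfK _ (gt_K t1); have tf2 := tfK _ (gt_K t2).
pose P : zmodType := PT (gt_b t1) (gt_emb t1).
have KP : K P := HK _ _ _ (gt_K t1) (val_pe (gt_b t1) (gt_emb t1)).
pose tP := @GTriple K M P KP (fP (gt_b t1) (gt_emb t1)) (fP_pe _ _) (bP (gt_b t1) (gt_emb t1)).
apply: (@t_trans _ _ _ tP).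
- apply: t_step. exists (gt_N t1), id, val. split; first exact: gt_K.
  split; first exact: id_pe. split; first exact: val_pe.
  by split => [m|] /=; rewrite /fP /bP ?SubK.
- apply: t_step. exists (gt_N t2), (g (gt_f t2) (gt_b t2) (pe1 := gt_emb t1)), id.
  split; first exact: gt_K. split; first exact (g_pe (gt_emb t1) (gt_emb t2) tf1 tf2 DD).
  split; first exact: id_pe.
  split => [m|] /=; [exact (g_fP (gt_emb t1) (gt_emb t2) tf2 DD m) | exact (g_bP (gt_emb t1) (gt_emb t2) tf2 DD)].
Qed.
End Main.

Section Count.
Variables (M : zmodType) (L : Type) (h : M -> L) (i : nat -> L) (e : (nat -> L) -> L).
Hypotheses (hi : injective h) (ii : injective i) (ei : injective e).
Definition code (o : option M) : L := e (fun r => match r, o with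
  | 0%N, Some m => h m | 0%N, None => i 0%N | _, Some _ => i 1%N | _, None => i 0%N end).
Lemma code_inj : injective code.
Proof.
move=> [m|] [m'|] /ei H.
- by rewrite (hi (congr1 (fun F => F 0%N) H)).
- by move: (congr1 (fun F => F 1%N) H) => /ii.
- by move: (congr1 (fun F => F 1%N) H) => /ii.
- by [].
Qed.
Definition enc (c : nat -> int -> option M) : L :=
  e (fun k => e (fun n => e (fun r => match r with
     | 0%N => code (c k (Posz n)) | _ => code (c k (Negz n)) end))).
Lemma enc_inj c c' : enc c = enc c' -> forall k j, c k j = c' k j.
Proof.
move=> /ei H k j; have /ei H1 := congr1 (fun F => F k) H.
case: j => n; have /ei H2 := congr1 (fun F => F n) H1.
- exact: code_inj (congr1 (fun F => F 0%N) H2).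
- exact: code_inj (congr1 (fun F => F 1%N) H2).
Qed.
End Count.

Definition cD (M : zmodType) (D : nat -> M -> int -> Prop) : nat -> int -> option M :=
  fun k j =>
  match excluded_middle_informative (exists m0, D k m0 j) with
  | left H => Some (proj1_sig (constructive_indefinite_description _ H))
  | right _ => None end.

Lemma cD_spec (M N : zmodType) (f : M -> N) b : pure_emb f -> forall k m j,
  Dr f b k m j <-> exists m0, cD (Dr f b) k j = Some m0 /\ exists y, y *+ k = m - m0.
Proof.
move=> pe k m j; rewrite /cD; case: excluded_middle_informative => [H|H].
- case: constructive_indefinite_description => m0 hm0 /=; split.
  + move=> hm; exists m0; split => //; exact: coset pe _ _ _ _ hm hm0.
  + move=> [m1 [[<-] [y hy]]]; exact: coset_back (proj1 (proj2 pe)) _ _ _ _ _ hm0 hy.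
- split; [move=> hm; exfalso; apply: H; by exists m | by move=> [m0 []]].
Qed.

Lemma gtp_D (K : zmodType -> Prop) (M : zmodType) (t1 t2 : gtriple K M) :
  gtp_eq t1 t2 ->
  forall k m j, Dr (gt_f t1) (gt_b t1) k m j <-> Dr (gt_f t2) (gt_b t2) k m j.
Proof.
rewrite /gtp_eq => H; elim: H => {t1 t2}
  [t1 t2 [N' [g1 [g2 [_ [pg1 [pg2 [hm hb]]]]]]] | t1 t2 t3 _ IH1 _ IH2] k m j.
- split.
  + exact: (Dr_transfer (proj1 (proj2 pg1)) pg2 hm hb).
  + exact: (Dr_transfer (proj1 (proj2 pg2)) pg1 (fun m => esym (hm m)) (esym hb)).
- exact: iff_trans (IH1 k m j) (IH2 k m j).
Qed.

Theorem lemma5p6 (K : zmodType -> Prop) :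
  AEC_pure K -> torsion_free_class K -> closed_pure_sub K -> arb_large K ->
  forall L : Type, infinite_type L -> same_card (nat -> L) L -> stable K L.
Proof.
move=> _ tfK HK _ L [i ii] [e eb] M KM [h hb].
have ei := bij_inj eb; have hi := bij_inj hb.
pose F (t : gtriple K M) := enc h i e (cD (Dr (gt_f t) (gt_b t))).
exists F => t1 t2; split.
- move=> /gtp_D HD; rewrite /F; congr (enc _ _ _ (cD _)).
  apply: functional_extensionality => k; apply: functional_extensionality => m.
  apply: functional_extensionality => j; apply: propositional_extensionality; exact: HD.
- move=> /(enc_inj hi ii ei) Hc; apply: (D_gtp HK tfK) => k m j.
  apply: iff_trans (cD_spec _ (gt_emb t1) k m j) _.
  apply: iff_sym; apply: iff_trans (cD_spec _ (gt_emb t2) k m j) _.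
  rewrite Hc; exact: iff_refl.
Qed.
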